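(* Let $\mathbb{D}$ be a division ring, let $m,n\ge 1$ be integers, and let $P$ be an $n\times m$ matrix over $\mathbb{D}$. If $V$ is an invertible $m\times m$ matrix over $\mathbb{D}$ and $W$ is an invertible $n\times n$ matrix over $\mathbb{D}$, then the rings $\mathfrak{M}(\mathbb{D}, m, n, P)$ and $\mathfrak{M}(\mathbb{D}, m, n, VPW)$ are isomorphic. Moreover, if $\mathbb{D}$ is a field, then $\mathfrak{M}(\mathbb{D}, m, n, P)$ and $\mathfrak{M}(\mathbb{D}, m, n, VPW)$ are isomorphic as $\mathbb{D}$-algebras.
   Context: For a division ring $\mathbb{D}$ and an $n\times m$ matrix $P$ over $\mathbb{D}$, $\mathfrak{M}(\mathbb{D}, m, n, P)$ denotes the set of all $m\times n$ matrices over $\mathbb{D}$ with entrywise addition and multiplication $A\bullet B = APB$ (usual matrix products on the right). When $\mathbb{D}$ is a field, scalar multiplication is entrywise, making it a $\mathbb{D}$-algebra. *)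

(* Defs.v *)
From mathcomp Require Import all_boot all_algebra.
Set Implicit Arguments. Unset Strict Implicit. Unset Printing Implicit Defensive.
Import GRing.Theory.
Local Open Scope ring_scope.

Definition is_division_ring (R : unitRingType) : Prop :=
  forall x : R, x != 0 -> x \is a GRing.unit.

Definition invertible_mx (R : pzRingType) (k : nat) (V : 'M[R]_k) : Prop :=
  exists V' : 'M[R]_k, V *m V' = 1%:M /\ V' *m V = 1%:M.

(* The sandwich product of M(D, m, n, P): A . B = A P B. *)
Definition sandwich_mul (R : pzRingType) (m n : nat) (P : 'M[R]_(n, m))
  (A B : 'M[R]_(m, n)) : 'M[R]_(m, n) := A *m P *m B.

Definition sandwich_ring_iso (R : pzRingType) (m n : nat) (P Q : 'M[R]_(n, m))
  (f : 'M[R]_(m, n) -> 'M[R]_(m, n)) : Prop :=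
  [/\ bijective f,
      (forall A B, f (A + B) = f A + f B) &
      (forall A B, f (sandwich_mul P A B) = sandwich_mul Q (f A) (f B))].

Definition sandwich_rings_isomorphic (R : pzRingType) (m n : nat)
  (P Q : 'M[R]_(n, m)) : Prop :=
  exists f, sandwich_ring_iso P Q f.

Definition sandwich_algebras_isomorphic (R : fieldType) (m n : nat)
  (P Q : 'M[R]_(n, m)) : Prop :=
  exists f, sandwich_ring_iso P Q f /\ (forall (a : R) A, f (a *: A) = a *: f A).

(* Main.v *)
Require Import Defs.
From mathcomp Require Import all_boot all_algebra.
Local Open Scope ring_scope.
Import GRing.Theory.

Lemma gen_iso (R : pzRingType) (m n : nat) (P : 'M[R]_(n, m)) (V : 'M[R]_n) (W : 'M[R]_m)
  (V' : 'M[R]_n) (W' : 'M[R]_m) :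
  V *m V' = 1%:M -> V' *m V = 1%:M -> W *m W' = 1%:M -> W' *m W = 1%:M ->
  sandwich_ring_iso P (V *m P *m W) (fun A => W' *m A *m V').
Proof.
move=> h1 h2 h3 h4; split.
- exists (fun A => W *m A *m V) => A.
    by rewrite !mulmxA h3 mul1mx -!mulmxA h2 mulmx1.
  by rewrite !mulmxA h4 mul1mx -!mulmxA h1 mulmx1.
- by move=> A B; rewrite mulmxDr mulmxDl.
- move=> A B; rewrite /sandwich_mul !mulmxA.
  rewrite -[W' *m A *m V' *m V](mulmxA) h2 mulmx1.
  rewrite -[W' *m A *m P *m W *m W'](mulmxA) h3 mulmx1.
  by [].
Qed.

Theorem lemma1p4 :
  (forall (D : unitRingType) (m n : nat), is_division_ring D ->
     (0 < m)%N -> (0 < n)%N ->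
     forall (P : 'M[D]_(n, m)) (V : 'M[D]_n) (W : 'M[D]_m),
       invertible_mx V -> invertible_mx W ->
       sandwich_rings_isomorphic P (V *m P *m W)) /\
  (forall (F : fieldType) (m n : nat),
     (0 < m)%N -> (0 < n)%N ->
     forall (P : 'M[F]_(n, m)) (V : 'M[F]_n) (W : 'M[F]_m),
       invertible_mx V -> invertible_mx W ->
       sandwich_algebras_isomorphic P (V *m P *m W)).
Proof.
split.
- move=> D m n _ _ _ P V W [V' [h1 h2]] [W' [h3 h4]].
  by eexists; apply: gen_iso h1 h2 h3 h4.
- move=> F m n _ _ P V W [V' [h1 h2]] [W' [h3 h4]].
  exists (fun A => W' *m A *m V'); split; first exact: gen_iso h1 h2 h3 h4.
  by move=> a A; rewrite -scalemxAr -!scalemxAl.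
Qed.
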